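(* Let $\theta_1,\theta_2,\theta_3\in\mathbb R$ and for $c_1,c_2,c_3\ge0$ with $c_1+c_2+c_3=1$ let $y(c_1,c_2,c_3)=\sum_{1\le k<j\le3}c_jc_k\sin^2\frac{\theta_j-\theta_k}{2}$. (i) If $\sin^2\frac{\theta_1-\theta_2}{2}\sin^2\frac{\theta_2-\theta_3}{2}\sin^2\frac{\theta_3-\theta_1}{2}>0$ and the vector $$\begin{bmatrix}\cos\frac{\theta_2-\theta_3}{2}\csc\frac{\theta_1-\theta_2}{2}\csc\frac{\theta_1-\theta_3}{2}\\ \cos\frac{\theta_1-\theta_3}{2}\csc\frac{\theta_2-\theta_1}{2}\csc\frac{\theta_2-\theta_3}{2}\\ \cos\frac{\theta_1-\theta_2}{2}\csc\frac{\theta_3-\theta_1}{2}\csc\frac{\theta_3-\theta_2}{2}\end{bmatrix}$$ has non-negative components, then $\max y=\frac14$. (ii) Otherwise $\max y=\frac14\max\{\sin^2\frac{\theta_1-\theta_2}{2},\sin^2\frac{\theta_1-\theta_3}{2},\sin^2\frac{\theta_2-\theta_3}{2}\}$. Here the maximum is over all $c_1,c_2,c_3\ge0$ with $c_1+c_2+c_3=1$. *)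

(* Defs.v *)
From Stdlib Require Import Reals Lra.
Open Scope R_scope.

Definition s2 (a b : R) : R := (sin ((a - b) / 2)) ^ 2.

Definition csc (x : R) : R := / sin x.

Definition simplex3 (c1 c2 c3 : R) : Prop :=
  0 <= c1 /\ 0 <= c2 /\ 0 <= c3 /\ c1 + c2 + c3 = 1.

Definition yfun (t1 t2 t3 c1 c2 c3 : R) : R :=
  c2 * c1 * s2 t2 t1 + c3 * c1 * s2 t3 t1 + c3 * c2 * s2 t3 t2.

Definition is_max_y (t1 t2 t3 m : R) : Prop :=
  (exists c1 c2 c3, simplex3 c1 c2 c3 /\ yfun t1 t2 t3 c1 c2 c3 = m) /\
  (forall c1 c2 c3, simplex3 c1 c2 c3 -> yfun t1 t2 t3 c1 c2 c3 <= m).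

Definition case_i (t1 t2 t3 : R) : Prop :=
  s2 t1 t2 * s2 t2 t3 * s2 t3 t1 > 0 /\
  0 <= cos ((t2 - t3) / 2) * csc ((t1 - t2) / 2) * csc ((t1 - t3) / 2) /\
  0 <= cos ((t1 - t3) / 2) * csc ((t2 - t1) / 2) * csc ((t2 - t3) / 2) /\
  0 <= cos ((t1 - t2) / 2) * csc ((t3 - t1) / 2) * csc ((t3 - t2) / 2).

(* Main.v *)
Require Import Defs.
From Stdlib Require Import Reals Lra.
Open Scope R_scope.

Lemma K1 a b: 2*sin a*sin(a+b)*cos b = sin a^2 + sin(a+b)^2 - sin b^2.
Proof. rewrite sin_plus. pose proof (sin2_cos2 a). pose proof (sin2_cos2 b). unfold Rsqr in *.
 set (sa := sin a) in *; set (ca := cos a) in *; set (sb := sin b) in *; set (cb := cos b) in *.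
 assert (E: 2*sa*(sa*cb+ca*sb)*cb - (sa^2 + (sa*cb+ca*sb)^2 - sb^2) = sa^2*(sb*sb+cb*cb-1) - sb^2*(sa*sa+ca*ca-1)) by ring.
 rewrite H, H0 in E. lra. Qed.
Lemma K2 a b: -2*sin a*sin b*cos(a+b) = sin a^2 + sin b^2 - sin(a+b)^2.
Proof. rewrite sin_plus, cos_plus. pose proof (sin2_cos2 a). pose proof (sin2_cos2 b). unfold Rsqr in *.
 set (sa := sin a) in *; set (ca := cos a) in *; set (sb := sin b) in *; set (cb := cos b) in *.
 assert (E: -2*sa*sb*(ca*cb-sa*sb) - (sa^2 + sb^2 - (sa*cb+ca*sb)^2) = sa^2*(sb*sb+cb*cb-1) + sb^2*(sa*sa+ca*ca-1)) by ring.
 rewrite H, H0 in E. lra. Qed.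
Lemma K3 a b: 2*sin(a+b)*sin b*cos a = sin(a+b)^2 + sin b^2 - sin a^2.
Proof. rewrite sin_plus. pose proof (sin2_cos2 a). pose proof (sin2_cos2 b). unfold Rsqr in *.
 set (sa := sin a) in *; set (ca := cos a) in *; set (sb := sin b) in *; set (cb := cos b) in *.
 assert (E: 2*(sa*cb+ca*sb)*sb*ca - ((sa*cb+ca*sb)^2 + sb^2 - sa^2) = sb^2*(sa*sa+ca*ca-1) - sa^2*(sb*sb+cb*cb-1)) by ring.
 rewrite H, H0 in E. lra. Qed.
Lemma Heron a b: 
  (sin a^2+sin b^2+sin(a+b)^2)^2 - 2*((sin a^2)^2+(sin b^2)^2+(sin(a+b)^2)^2) = 4*sin a^2*sin b^2*sin(a+b)^2.
Proof. pose proof (K1 a b). pose proof (sin2_cos2 b). unfold Rsqr in *.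
 assert (E: (2*sin a*sin(a+b)*cos b)^2 = 4*sin a^2*sin(a+b)^2*(cos b*cos b)) by ring.
 replace (cos b * cos b) with (1 - sin b^2) in E by lra. rewrite H in E.
 set (A := sin a ^2) in *; set (B := sin b ^2) in *; set (C := sin (a+b) ^2) in *. lra. Qed.

Lemma ub X1 Y1 X2 Y2 X3 Y3 c1 c2 c3 :
  X1^2+Y1^2=1 -> X2^2+Y2^2=1 -> X3^2+Y3^2=1 -> c1+c2+c3=1 ->
  c1*c2*((1-(X1*X2+Y1*Y2))/2) + c1*c3*((1-(X1*X3+Y1*Y3))/2) + c2*c3*((1-(X2*X3+Y2*Y3))/2) <= 1/4.
Proof. intros H1 H2 H3 H. assert (c3 = 1-c1-c2) by lra. subst c3.
 assert (E: 1 - 4*(c1*c2*((1-(X1*X2+Y1*Y2))/2) + c1*(1-c1-c2)*((1-(X1*X3+Y1*Y3))/2) + c2*(1-c1-c2)*((1-(X2*X3+Y2*Y3))/2)) - ((c1*X1+c2*X2+(1-c1-c2)*X3)^2 + (c1*Y1+c2*Y2+(1-c1-c2)*Y3)^2) = - (c1^2*(X1^2+Y1^2-1) + c2^2*(X2^2+Y2^2-1) + (1-c1-c2)^2*(X3^2+Y3^2-1))) by field.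
 rewrite H1, H2, H3 in E.
 assert (0 <= (c1*X1+c2*X2+(1-c1-c2)*X3)^2 + (c1*Y1+c2*Y2+(1-c1-c2)*Y3)^2) by (apply Rplus_le_le_0_compat; apply pow2_ge_0).
 lra. Qed.

Lemma ube X1 Y1 X2 Y2 X3 Y3 c1 c2 c3 :
  X1^2+Y1^2=1 -> X2^2+Y2^2=1 -> X3^2+Y3^2=1 -> 0<=c1 -> c1+c2+c3=1 ->
  (1-(X2*X3+Y2*Y3))/2 >= (1-(X1*X2+Y1*Y2))/2 + (1-(X1*X3+Y1*Y3))/2 ->
  c1*c2*((1-(X1*X2+Y1*Y2))/2) + c1*c3*((1-(X1*X3+Y1*Y3))/2) + c2*c3*((1-(X2*X3+Y2*Y3))/2) <= ((1-(X2*X3+Y2*Y3))/2)/4.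
Proof. intros H1 H2 H3 Hc H Htri. assert (c3 = 1-c1-c2) by lra. subst c3.
 set (A := (1-(X1*X2+Y1*Y2))/2) in *. set (C := (1-(X1*X3+Y1*Y3))/2) in *. set (B := (1-(X2*X3+Y2*Y3))/2) in *.
 assert (E: B - 4*(c1*c2*A + c1*(1-c1-c2)*C + c2*(1-c1-c2)*B) - (2*c1*(B-A-C) + ((c1*X1+(c2-1/2)*X2+(1-c1-c2-1/2)*X3)^2 + (c1*Y1+(c2-1/2)*Y2+(1-c1-c2-1/2)*Y3)^2)) = - (c1^2*(X1^2+Y1^2-1) + (c2-1/2)^2*(X2^2+Y2^2-1) + (1-c1-c2-1/2)^2*(X3^2+Y3^2-1))) by (unfold A, B, C; field).
 rewrite H1, H2, H3 in E.
 assert (0 <= (c1*X1+(c2-1/2)*X2+(1-c1-c2-1/2)*X3)^2 + (c1*Y1+(c2-1/2)*Y2+(1-c1-c2-1/2)*Y3)^2) by (apply Rplus_le_le_0_compat; apply pow2_ge_0).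
 assert (0 <= c1*(B-A-C)) by (apply Rmult_le_pos; lra).
 lra. Qed.

Lemma s2_full a b : s2 a b = (1 - (cos a * cos b + sin a * sin b))/2.
Proof. unfold s2. rewrite <- cos_minus.
 assert (E: cos (a-b) = cos (2*((a-b)/2))) by (f_equal; field).
 rewrite cos_2a_sin in E. rewrite E. field. Qed.

Lemma circ x : cos x ^2 + sin x ^2 = 1.
Proof. pose proof (sin2_cos2 x). unfold Rsqr in H. lra. Qed.
Lemma comp_val N D1 D2 T: D1<>0 -> D2<>0 -> 2*N*D1*D2 = T -> N*/D1*/D2 = T/(2*D1^2*D2^2).
Proof. intros H1 H2 H. rewrite <- H. field. auto. Qed.

Lemma div_nonneg_inv T D : 0 < D -> 0 <= T/D -> 0 <= T.
Proof. intros. replace T with ((T/D)*D) by (field; lra). apply Rmult_le_pos; lra. Qed.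

Lemma sq_ne0 x : 0 < x^2 -> x <> 0.
Proof. intros H E. rewrite E in H. simpl in H. lra. Qed.

Lemma core a b:
 (sin a^2 * sin b^2 * sin(a+b)^2 > 0 /\ 0 <= cos b * csc a * csc (a+b) /\
  0 <= cos(a+b) * csc(-a) * csc b /\ 0 <= cos a * csc(-(a+b)) * csc(-b)) <->
 (0 < sin a^2 /\ 0 < sin b^2 /\ 0 < sin(a+b)^2 /\
  0 <= sin a^2 + sin(a+b)^2 - sin b^2 /\ 0 <= sin a^2 + sin b^2 - sin(a+b)^2 /\
  0 <= sin(a+b)^2 + sin b^2 - sin a^2).
Proof.
 unfold csc. rewrite !sin_neg.
 pose proof (K1 a b) as k1. pose proof (K2 a b) as k2. pose proof (K3 a b) as k3.
 assert (EA: 0 <= sin a^2) by apply pow2_ge_0.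
 assert (EB: 0 <= sin b^2) by apply pow2_ge_0.
 assert (EC: 0 <= sin (a+b)^2) by apply pow2_ge_0.
 assert (pos3: sin a^2 * sin b^2 * sin(a+b)^2 > 0 <-> (0 < sin a^2 /\ 0 < sin b^2 /\ 0 < sin(a+b)^2)).
 { split.
   - intros H. repeat split.
     + destruct EA as [|E]; auto. rewrite <- E in H. lra.
     + destruct EB as [|E]; auto. rewrite <- E in H. lra.
     + destruct EC as [|E]; auto. rewrite <- E in H. lra.
   - intros (h1 & h2 & h3). apply Rmult_gt_0_compat; [apply Rmult_gt_0_compat|]; auto. }
 assert (vals: 0 < sin a^2 -> 0 < sin b^2 -> 0 < sin(a+b)^2 ->
   cos b * / sin a * / sin (a+b) = (sin a^2 + sin(a+b)^2 - sin b^2)/(2*sin a^2*sin(a+b)^2) /\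
   cos(a+b) * / (- sin a) * / sin b = (sin a^2 + sin b^2 - sin(a+b)^2)/(2*(- sin a)^2*sin b^2) /\
   cos a * / (- sin (a+b)) * / (- sin b) = (sin(a+b)^2 + sin b^2 - sin a^2)/(2*(- sin (a+b))^2*(- sin b)^2)).
 { intros h1 h2 h3. apply sq_ne0 in h1, h2, h3. repeat split; apply comp_val.
   all: try lra. all: try (intro; apply h1; lra). all: try (intro; apply h2; lra). all: try (intro; apply h3; lra).
   }
 assert (sqn: forall x, (-x)^2 = x^2) by (intros; ring).
 rewrite !sqn in vals.
 split.
 - intros (hp & c1 & c2 & c3). apply pos3 in hp. destruct hp as (h1 & h2 & h3).
   destruct (vals h1 h2 h3) as (v1 & v2 & v3). rewrite v1 in c1. rewrite v2 in c2. rewrite v3 in c3.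
   repeat split; auto.
   + assert (0 < 2*sin a^2*sin(a+b)^2) by (apply Rmult_gt_0_compat; lra).
     eapply div_nonneg_inv; eauto.
   + assert (0 < 2*sin a^2*sin b^2) by (apply Rmult_gt_0_compat; lra).
     eapply div_nonneg_inv; eauto.
   + assert (0 < 2*sin (a+b)^2*sin b^2) by (apply Rmult_gt_0_compat; lra).
     eapply div_nonneg_inv; eauto.
 - intros (h1 & h2 & h3 & t1 & t2 & t3). destruct (vals h1 h2 h3) as (v1 & v2 & v3).
   rewrite v1, v2, v3. repeat split.
   + apply pos3; auto.
   + apply Rmult_le_pos; [lra|]. apply Rlt_le, Rinv_0_lt_compat. apply Rmult_gt_0_compat; [apply Rmult_gt_0_compat|]; lra.
   + apply Rmult_le_pos; [lra|]. apply Rlt_le, Rinv_0_lt_compat. apply Rmult_gt_0_compat; [apply Rmult_gt_0_compat|]; lra.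
   + apply Rmult_le_pos; [lra|]. apply Rlt_le, Rinv_0_lt_compat. apply Rmult_gt_0_compat; [apply Rmult_gt_0_compat|]; lra.
Qed.

Lemma s2_sym a b: s2 a b = s2 b a.
Proof. rewrite !s2_full. field. Qed.

Lemma y_eq t1 t2 t3 c1 c2 c3: yfun t1 t2 t3 c1 c2 c3 = c1*c2*s2 t1 t2 + c1*c3*s2 t1 t3 + c2*c3*s2 t2 t3.
Proof. unfold yfun. rewrite (s2_sym t2 t1), (s2_sym t3 t1), (s2_sym t3 t2). ring. Qed.

Lemma ub_main t1 t2 t3 c1 c2 c3: simplex3 c1 c2 c3 -> yfun t1 t2 t3 c1 c2 c3 <= 1/4.
Proof. intros (h1&h2&h3&h). rewrite y_eq, !s2_full. apply ub; auto using circ. Qed.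

Lemma ub_e1 t1 t2 t3 c1 c2 c3: simplex3 c1 c2 c3 -> s2 t2 t3 >= s2 t1 t2 + s2 t1 t3 ->
  yfun t1 t2 t3 c1 c2 c3 <= s2 t2 t3/4.
Proof. intros (h1&h2&h3&h) T. rewrite y_eq. rewrite !s2_full in *. apply ube; auto using circ. Qed.

Lemma ub_e2 t1 t2 t3 c1 c2 c3: simplex3 c1 c2 c3 -> s2 t1 t3 >= s2 t1 t2 + s2 t2 t3 ->
  yfun t1 t2 t3 c1 c2 c3 <= s2 t1 t3/4.
Proof. intros (h1&h2&h3&h) T. rewrite y_eq. rewrite !s2_full in *.
 pose proof (ube (cos t2) (sin t2) (cos t1) (sin t1) (cos t3) (sin t3) c2 c1 c3 (circ _) (circ _) (circ _) h2 ltac:(lra) ltac:(lra)). lra. Qed.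

Lemma ub_e3 t1 t2 t3 c1 c2 c3: simplex3 c1 c2 c3 -> s2 t1 t2 >= s2 t1 t3 + s2 t2 t3 ->
  yfun t1 t2 t3 c1 c2 c3 <= s2 t1 t2/4.
Proof. intros (h1&h2&h3&h) T. rewrite y_eq. rewrite !s2_full in *.
 pose proof (ube (cos t3) (sin t3) (cos t1) (sin t1) (cos t2) (sin t2) c3 c1 c2 (circ _) (circ _) (circ _) h3 ltac:(lra) ltac:(lra)). lra. Qed.

Lemma caseI_iff t1 t2 t3 : case_i t1 t2 t3 <->
  (0 < s2 t1 t2 /\ 0 < s2 t2 t3 /\ 0 < s2 t1 t3 /\
   0 <= s2 t1 t2 + s2 t1 t3 - s2 t2 t3 /\ 0 <= s2 t1 t2 + s2 t2 t3 - s2 t1 t3 /\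
   0 <= s2 t1 t3 + s2 t2 t3 - s2 t1 t2).
Proof.
 unfold case_i. rewrite (s2_sym t3 t1). unfold s2.
 replace ((t1-t3)/2) with ((t1-t2)/2 + (t2-t3)/2) by field.
 replace ((t2-t1)/2) with (-((t1-t2)/2)) by field.
 replace ((t3-t1)/2) with (-((t1-t2)/2 + (t2-t3)/2)) by field.
 replace ((t3-t2)/2) with (-((t2-t3)/2)) by field.
 rewrite core. split; intros (?&?&?&?&?&?); repeat split; auto; lra.
Qed.

Lemma heron_t t1 t2 t3 : let A := s2 t1 t2 in let B := s2 t2 t3 in let C := s2 t1 t3 in
  (A+B+C)^2 - 2*(A^2+B^2+C^2) = 4*A*B*C.
Proof. intros A B C. subst A B C. unfold s2.
 replace ((t1-t3)/2) with ((t1-t2)/2 + (t2-t3)/2) by field.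
 pose proof (Heron ((t1-t2)/2) ((t2-t3)/2)). lra. Qed.

Lemma alg A B C : 0 < A -> 0 < B -> 0 < C -> (A+B+C)^2 - 2*(A^2+B^2+C^2) = 4*A*B*C ->
  (A+C-B)/(4*A*C) + (A+B-C)/(4*A*B) + (B+C-A)/(4*B*C) = 1 /\
  (A+C-B)/(4*A*C) * ((A+B-C)/(4*A*B)) * A + (A+C-B)/(4*A*C) * ((B+C-A)/(4*B*C)) * C
   + (A+B-C)/(4*A*B) * ((B+C-A)/(4*B*C)) * B = 1/4.
Proof. intros hA hB hC H. split.
 - replace ((A+C-B)/(4*A*C) + (A+B-C)/(4*A*B) + (B+C-A)/(4*B*C)) with
     ((B*(A+C-B) + C*(A+B-C) + A*(B+C-A))/(4*A*B*C)) by (field; lra).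
   replace (B*(A+C-B) + C*(A+B-C) + A*(B+C-A)) with (4*A*B*C) by lra. field. lra.
 - replace ((A+C-B)/(4*A*C) * ((A+B-C)/(4*A*B)) * A + (A+C-B)/(4*A*C) * ((B+C-A)/(4*B*C)) * C
   + (A+B-C)/(4*A*B) * ((B+C-A)/(4*B*C)) * B) with
     (((A+C-B)*(A+B-C) + (A+C-B)*(B+C-A) + (A+B-C)*(B+C-A))/(16*A*B*C)) by (field; lra).
   replace ((A+C-B)*(A+B-C) + (A+C-B)*(B+C-A) + (A+B-C)*(B+C-A)) with (4*A*B*C) by lra. field. lra.
Qed.

Theorem lemma6 (t1 t2 t3 : R) :
  (case_i t1 t2 t3 -> is_max_y t1 t2 t3 (1 / 4)) /\
  (~ case_i t1 t2 t3 ->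
     is_max_y t1 t2 t3
       (1 / 4 * Rmax (s2 t1 t2) (Rmax (s2 t1 t3) (s2 t2 t3)))).
Proof.
 pose proof (heron_t t1 t2 t3) as Hh. simpl in Hh.
 assert (EA: 0 <= s2 t1 t2) by (unfold s2; apply pow2_ge_0).
 assert (EB: 0 <= s2 t2 t3) by (unfold s2; apply pow2_ge_0).
 assert (EC: 0 <= s2 t1 t3) by (unfold s2; apply pow2_ge_0).
 set (A := s2 t1 t2) in *. set (B := s2 t2 t3) in *. set (C := s2 t1 t3) in *.
 split.
 - intros Hc. apply caseI_iff in Hc. fold A B C in Hc. destruct Hc as (hA&hB&hC&r1&r2&r3).
   split.
   + exists ((A+C-B)/(4*A*C)), ((A+B-C)/(4*A*B)), ((B+C-A)/(4*B*C)).
     destruct (alg A B C hA hB hC Hh) as [S Y]. split.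
     * repeat split; try exact S; apply Rmult_le_pos; try lra; apply Rlt_le, Rinv_0_lt_compat;
       (apply Rmult_gt_0_compat; [apply Rmult_gt_0_compat|]; lra).
     * rewrite y_eq. fold A B C. rewrite <- Y. ring.
   + intros; apply ub_main; auto.
 - intros Hn.
   assert (Htri: B >= A + C \/ C >= A + B \/ A >= C + B).
   { destruct (Rge_dec B (A+C)); auto. destruct (Rge_dec C (A+B)); auto. destruct (Rge_dec A (C+B)); auto.
     exfalso. apply Hn. apply caseI_iff. fold A B C. repeat split; lra. }
   split.
   + unfold Rmax. destruct (Rle_dec C B); destruct (Rle_dec A _).
     * exists 0, (1/2), (1/2). split. unfold simplex3; lra. rewrite y_eq. fold A B C. lra.
     * exists (1/2), (1/2), 0. split. unfold simplex3; lra. rewrite y_eq. fold A B C. lra.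
     * exists (1/2), 0, (1/2). split. unfold simplex3; lra. rewrite y_eq. fold A B C. lra.
     * exists (1/2), (1/2), 0. split. unfold simplex3; lra. rewrite y_eq. fold A B C. lra.
   + intros c1 c2 c3 Hs.
     pose proof (Rmax_l A (Rmax C B)). pose proof (Rmax_r A (Rmax C B)).
     pose proof (Rmax_l C B). pose proof (Rmax_r C B).
     destruct Htri as [T|[T|T]].
     * pose proof (ub_e1 t1 t2 t3 c1 c2 c3 Hs T). fold B in H3. lra.
     * pose proof (ub_e2 t1 t2 t3 c1 c2 c3 Hs T). fold C in H3. lra.
     * pose proof (ub_e3 t1 t2 t3 c1 c2 c3 Hs). fold A B C in H3. specialize (H3 ltac:(lra)). lra.
Qed.
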